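(* For every bin capacity $S>0$, every finite multiset $D$ of items with sizes in $(0,S]$ and every integer $k\ge1$, $OPT(D_k)\le 2V(D_k)/S+k$.
   Context: $D_k$ is the collection of $k$ copies of each item of $D$, and $V(D_k)$ is the total size of all items in $D_k$ (i.e. $k$ times the total size of $D$). A $k$-times bin packing of $D$ assigns all copies in $D_k$ to bins so that each bin has total size at most $S$ and no bin contains two copies of the same item; $OPT(D_k)$ is the minimum number of bins. *)

(* Defs.v *)
From mathcomp Require Import all_boot all_order all_algebra.
Set Implicit Arguments. Unset Strict Implicit. Unset Printing Implicit Defensive.
Import Order.TTheory GRing.Theory Num.Theory.
Local Open Scope ring_scope.

(* A finite multiset D of items is a sequence of item sizes; item i is
   indexed by i : 'I_(size D) and has size D`_i.
   D_k consists of the copies (i, j), i : 'I_(size D), j : 'I_k.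
   A k-times bin packing of D into m bins is an assignment
   f : 'I_(size D) -> 'I_k -> 'I_m  (copy j of item i goes into bin f i j)
   such that every bin has total size at most S and no bin contains two
   copies of the same item (f i is injective for each item i). *)
Definition ktimes_packing (R : numDomainType) (S : R) (D : seq R) (k m : nat)
    (f : 'I_(size D) -> 'I_k -> 'I_m) : Prop :=
  (forall b : 'I_m,
     \sum_(i < size D) \sum_(j < k | f i j == b) D`_i <= S)
  /\ (forall i : 'I_(size D), injective (f i)).

Definition ktimes_packable (R : numDomainType) (S : R) (D : seq R) (k m : nat) : Prop :=
  exists f : 'I_(size D) -> 'I_k -> 'I_m, @ktimes_packing R S D k m f.

Definition Vk (R : numDomainType) (D : seq R) (k : nat) : R :=
  (\sum_(i < size D) D`_i) *+ k.

(* Main.v *)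
Require Import Defs.
From mathcomp Require Import all_boot all_order all_algebra.
From mathcomp Require Import zify lra.
Set Implicit Arguments. Unset Strict Implicit. Unset Printing Implicit Defensive.
Import Order.TTheory GRing.Theory Num.Theory.
Local Open Scope ring_scope.

Definition load (R : realFieldType) (D : seq R) (g : nat -> nat) (n r : nat) : R :=
  \sum_(0 <= i < n) (if g i == r then D`_i else 0).

Lemma Dnn (R : realFieldType) (S : R) (D : seq R) :
  all (fun x => (0 < x) && (x <= S)) D -> forall i, 0 <= D`_i.
Proof.
move=> /(all_nthP 0) H i; case: (ltnP i (size D)) => hi.
  by case/andP: (H i hi) => /ltW.
by rewrite nth_default.
Qed.

Lemma load_ge0 (R : realFieldType) (S : R) (D : seq R) g n r :
  all (fun x => (0 < x) && (x <= S)) D -> 0 <= load D g n r.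
Proof.
move=> H; apply: sumr_ge0 => i _; case: ifP => // _; exact: Dnn H i.
Qed.

Lemma load_recr (R : realFieldType) (D : seq R) g n r :
  load D g n.+1 r = load D g n r + (if g n == r then D`_n else 0).
Proof. by rewrite /load big_nat_recr. Qed.

Lemma load_ext (R : realFieldType) (D : seq R) g g' n r :
  (forall i, (i < n)%N -> g' i = g i) -> load D g' n r = load D g n r.
Proof.
move=> H; rewrite /load big_nat_cond [RHS]big_nat_cond; apply: eq_bigr => i /andP[/andP[_ hi] _].
by rewrite H.
Qed.

Lemma load_empty (R : realFieldType) (D : seq R) g n N :
  (forall i, (i < n)%N -> (g i < N)%N) -> load D g n N = 0.
Proof.
move=> H; rewrite /load big_nat_cond big1 // => i /andP[/andP[_ hi] _].
by rewrite (ltn_eqF (H i hi)).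
Qed.

Lemma nf (R : realFieldType) (S : R) (D : seq R) :
  0 < S -> all (fun x => (0 < x) && (x <= S)) D -> forall n, (n <= size D)%N ->
  exists N g, [/\ (0 < N)%N, (forall i, (i < n)%N -> (g i < N)%N),
     (forall r, load D g n r <= S) &
     (N.-1)%:R * S <= 2 * (\sum_(0 <= i < n) D`_i) - load D g n N.-1].
Proof.
move=> HS Hall; elim=> [|n IH] hn.
  exists 1%N, (fun _ => 0%N); split => //.
    by move=> r; rewrite /load big_geq // ltW.
  by rewrite /load !big_geq // mul0r mulr0 subr0.
have [N [g [N0 Hg Hl Hi]]] := IH (ltnW hn).
have /andP[x0 xS] : (0 < D`_n) && (D`_n <= S) by apply: (all_nthP 0 Hall).
have hL := load_ge0 g n N.-1 Hall.
have [Hle|Hgt] := lerP (load D g n N.-1 + D`_n) S.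
  pose g' := fun i => if i == n then N.-1 else g i.
  have E : forall r, load D g' n r = load D g n r.
    by move=> r; apply: load_ext => i hi; rewrite /g' ltn_eqF.
  exists N, g'; split => //.
  - move=> i hi; rewrite /g'; case: eqP => [_|ne]; first by rewrite prednK.
    by apply: Hg; rewrite ltnS leq_eqVlt in hi; case/orP: hi => // /eqP.
  - move=> r; rewrite load_recr E /g' eqxx; case: eqP => [<-|_] //.
    by rewrite addr0.
  - rewrite load_recr E /g' eqxx eqxx big_nat_recr //=; lra.
pose g' := fun i => if i == n then N else g i.
have E : forall r, load D g' n r = load D g n r.
  by move=> r; apply: load_ext => i hi; rewrite /g' ltn_eqF.
have E0 := load_empty D Hg.
exists N.+1, g'; split => //.
- move=> i hi; rewrite /g'; case: eqP => [_|ne] //.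
  by apply: ltnW; apply: Hg; rewrite ltnS leq_eqVlt in hi; case/orP: hi => // /eqP.
- move=> r; rewrite load_recr E /g' eqxx; case: eqP => [<-|_] //.
    by rewrite E0 add0r.
  by rewrite addr0.
- rewrite load_recr /= E /g' eqxx eqxx E0 big_nat_recr //=.
  have -> : (N%:R : R) = (N.-1)%:R + 1 by rewrite natr1 prednK.
  lra.
Qed.

Lemma fP (k N gi : nat) (j : 'I_k) : (gi < N)%N -> (j * N + gi < k * N)%N.
Proof. have := ltn_ord j; nia. Qed.

Theorem lemma10 (R : realFieldType) (S : R) (D : seq R) (k : nat) :
  0 < S ->
  all (fun x => (0 < x) && (x <= S)) D ->
  (1 <= k)%N ->
  exists m : nat, @ktimes_packable R S D k m /\ (m%:R <= 2 * @Vk R D k / S + k%:R).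
Proof.
move=> HS Hall Hk.
have [N [g [N0 Hg Hl Hi]]] := nf HS Hall (leqnn (size D)).
pose f := fun (i : 'I_(size D)) (j : 'I_k) => Ordinal (fP j (Hg i (ltn_ord i))).
have finj : forall i, injective (f i).
  move=> i j1 j2 /(congr1 val) /= H; apply: val_inj => /=; nia.
exists (k * N)%N; split.
  exists f; split => // b.
  apply: (le_trans _ (Hl (b %% N)%N)).
  rewrite /load big_mkord; apply: ler_sum => i _.
  case: (pickP (fun j => f i j == b)) => [j0 Hj0|Hn].
    rewrite (big_pred1 j0); last first.
      by move=> j /=; apply/eqP/eqP => [H|->]; [apply: (finj i); rewrite H; exact/esym/eqP|exact/eqP].
    have -> : g i == (b %% N)%N.
      move/eqP: Hj0 => <- /=; rewrite modnMDl modn_small //; by apply (Hg _ (ltn_ord i)).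
    by [].
  rewrite big_pred0 //; case: ifP => _ //; exact: Dnn Hall i.
rewrite /Vk.
have hL := load_ge0 g (size D) N.-1 Hall.
move: Hi; rewrite big_mkord => Hi.
set V := \sum_(i < size D) D`_i in Hi *.
have -> : ((k * N)%N%:R : R) = k%:R * ((N.-1)%:R + 1) by rewrite natrM natr1 prednK.
rewrite -mulr_natr.
have hk : (0 : R) <= k%:R by [].
have : k%:R * (N.-1)%:R <= 2 * (V * k%:R) / S.
  rewrite ler_pdivlMr //; nra.
lra.
Qed.
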